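(* Let $X\in\mathbb{R}^{n\times p}$, $y\in\mathbb{R}^n$, $\lambda\ge0$, $\mu>0$, $A=X^\top X$, $\eta=\lambda_{\max}(\mu A^\top A)+1$, $K\ge1$ and a partition $I_1,\dots,I_K$ of $\{1,\dots,p\}$ into nonempty sets. Let $\{g^t=(\beta^t,z^t,u^t)\}_{t\ge0}$ be generated by Algorithm 1 or by Algorithm 2 (defined below) from an arbitrary initial point, and assume the set $\Omega^*$ of saddle points of the Lagrangian $L$ (defined below) is nonempty. Then: (1) (Global convergence) $g^t$ converges to some $g^*=(\beta^*,z^*,u^* )\in\Omega^*$; (2) (Rate) for every integer $T>0$, $$\|g^T-g^{T+1}\|_{H}^2\le \frac{1}{T+1}\|g^0-g^*\|_H^2,$$ where $H$ is the positive definite matrix defined below.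
   Context: Notation: $\mathcal{S}_\tau(v)=\mathrm{sign}(v)\odot\max\{|v|-\tau,0\}$ (componentwise soft thresholding); $\lambda_{\max}$ is the largest eigenvalue; $\|v\|_H=\sqrt{v^\top Hv}$. $X_i$ is the submatrix of $X$ with columns in $I_i$, $A_i=X^\top X_i$, $\beta_{i\cdot}$ is the subvector of $\beta$ indexed by $I_i$ (so $A\beta=\sum_iA_i\beta_{i\cdot}$). Let $\mathcal{Z}_0=\{z\in\mathbb{R}^p:\|z\|_\infty\le n\lambda\}$ and $\delta_{\mathcal{Z}_0}(z)=0$ if $z\in\mathcal{Z}_0$, $+\infty$ otherwise. The Lagrangian is $L(\beta,z;u)=\|\beta\|_1+\delta_{\mathcal{Z}_0}(z)-u^\top(A\beta-z-X^\top y)$ on $\mathbb{R}^p\times\mathbb{R}^p\times\mathbb{R}^p$; $\Omega^*$ is the set of $(\beta^*,z^*,u^* )$ with $L(\beta^*,z^*,u)\le L(\beta^*,z^*,u^* )\le L(\beta,z,u^* )$ for all $(\beta,z,u)$. Algorithm 1, for $t\ge0$: $\beta^{t+1}=\mathcal{S}_{1/\eta}(\beta^t+A^\top u^t/\eta)$; $z^{t+1}=\min\{\max\{z^t-u^t/\mu,-n\lambda\},n\lambda\}$; $u^{t+1}=u^t-\frac{\mu}{2}[2(A\beta^{t+1}-z^{t+1}-X^\top y)-(A\beta^t-z^t-X^\top y)]$. Algorithm 2, for $t\ge0$: $\beta^{t+1}_{i\cdot}=\mathcal{S}_{1/\eta}(\beta^t_{i\cdot}+A_i^\top u^t/\eta)$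 for $i=1,\dots,K$; $z^{t+1}$ as in Algorithm 1; $u^{t+1}=u^t-\frac{\mu}{2}[2(\sum_iA_i\beta^{t+1}_{i\cdot}-z^{t+1}-X^\top y)-(\sum_iA_i\beta^{t}_{i\cdot}-z^t-X^\top y)]$. The matrix $H\in\mathbb{R}^{3p\times3p}$ (acting on $g=(\beta,z,u)$) is $$H=\begin{pmatrix}\mu A^\top A+S & 0 & A^\top\\ 0 & \mu I_p & -I_p\\ A & -I_p & \frac{2}{\mu}I_p\end{pmatrix},\qquad S=\eta I_p-\mu A^\top A.$$ *)

(* Defs.v *)
From HB Require Import structures.
From mathcomp Require Import all_boot all_order all_algebra.
From mathcomp Require Import all_classical all_reals all_analysis.
Set Implicit Arguments. Unset Strict Implicit. Unset Printing Implicit Defensive.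
Import Order.TTheory GRing.Theory Num.Theory.
Import numFieldNormedType.Exports.
Local Open Scope ring_scope.

Section Defs.
Variable R : realType.

Definition soft (m : nat) (tau : R) (v : 'cV[R]_m) : 'cV[R]_m :=
  \col_i (Num.sg (v i 0) * Num.max (`|v i 0| - tau) 0).

(* componentwise projection onto Z0 = { z : ||z||_oo <= n*lam } *)
Definition clip (p : nat) (c : R) (v : 'cV[R]_p) : 'cV[R]_p :=
  \col_i Num.min (Num.max (v i 0) (- c)) c.

Definition norm1 (p : nat) (v : 'cV[R]_p) : R := \sum_i `|v i 0|.

Definition is_lambda_max (p : nat) (M : 'M[R]_p) (lmax : R) : Prop :=
  eigenvalue M lmax /\ (forall a, eigenvalue M a -> a <= lmax).

Definition block (p K : nat) (blk : 'I_p -> 'I_K) (i : 'I_K) : {set 'I_p} :=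
  [set j | blk j == i].

(* selection matrix: column k of sel I is the k-th element of I; so
   X *m sel I = X_I (columns indexed by I) and (sel I)^T *m b = b_I *)
Definition sel (p : nat) (I : {set 'I_p}) : 'M[R]_(p, #|I|) :=
  \matrix_(j, k) (j == enum_val k)%:R.

Definition residual (n p : nat) (X : 'M[R]_(n, p)) (y : 'cV[R]_n)
  (Ab z : 'cV[R]_p) : 'cV[R]_p := Ab - z - X^T *m y.

Definition algorithm1 (n p : nat) (X : 'M[R]_(n, p)) (y : 'cV[R]_n)
  (lam mu eta : R) (beta z u : nat -> 'cV[R]_p) : Prop :=
  let A := X^T *m X in
  forall t : nat,
    [/\ beta t.+1 = soft eta^-1 (beta t + eta^-1 *: (A^T *m u t)),
        z t.+1 = clip (n%:R * lam) (z t - mu^-1 *: u t) &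
        u t.+1 = u t - (mu / 2) *:
          (2 *: residual X y (A *m beta t.+1) (z t.+1)
             - residual X y (A *m beta t) (z t))].

Definition algorithm2 (n p K : nat) (blk : 'I_p -> 'I_K) (X : 'M[R]_(n, p))
  (y : 'cV[R]_n) (lam mu eta : R) (beta z u : nat -> 'cV[R]_p) : Prop :=
  let A := X^T *m X in
  let Ai := fun i : 'I_K => X^T *m (X *m sel (block blk i)) in
  let bi := fun (i : 'I_K) (b : 'cV[R]_p) => (sel (block blk i))^T *m b in
  let sumAb := fun b : 'cV[R]_p => \sum_(i < K) Ai i *m bi i b in
  forall t : nat,
    [/\ (forall i : 'I_K,
           bi i (beta t.+1) = soft eta^-1 (bi i (beta t) + eta^-1 *: ((Ai i)^T *m u t))),
        z t.+1 = clip (n%:R * lam) (z t - mu^-1 *: u t) &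
        u t.+1 = u t - (mu / 2) *:
          (2 *: residual X y (sumAb (beta t.+1)) (z t.+1)
             - residual X y (sumAb (beta t)) (z t))].

Definition deltaZ0 (n p : nat) (lam : R) (z : 'cV[R]_p) : \bar R :=
  if [forall i, `|z i 0| <= n%:R * lam] then 0%E else +oo%E.

Definition lagrangian (n p : nat) (X : 'M[R]_(n, p)) (y : 'cV[R]_n) (lam : R)
  (beta z u : 'cV[R]_p) : \bar R :=
  ((norm1 beta)%:E + deltaZ0 n lam z
    + (- (u^T *m residual X y ((X^T *m X) *m beta) z) 0 0)%:E)%E.

Definition saddle (n p : nat) (X : 'M[R]_(n, p)) (y : 'cV[R]_n) (lam : R)
  (bs zs us : 'cV[R]_p) : Prop :=
  forall beta z u : 'cV[R]_p,
    (lagrangian X y lam bs zs u <= lagrangian X y lam bs zs us)%E /\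
    (lagrangian X y lam bs zs us <= lagrangian X y lam beta z us)%E.

(* the matrix H acting on g = (beta, z, u) stacked as a column of size p+p+p *)
Definition Hmat (n p : nat) (X : 'M[R]_(n, p)) (mu eta : R) : 'M[R]_(p + p + p) :=
  let A := X^T *m X in
  let S := eta%:M - mu *: (A^T *m A) in
  block_mx (block_mx (mu *: (A^T *m A) + S) 0 0 (mu%:M))
           (col_mx (A^T) (- 1%:M))
           (row_mx A (- 1%:M))
           ((2 / mu)%:M).

Definition stack (p : nat) (b z u : 'cV[R]_p) : 'cV[R]_(p + p + p) :=
  col_mx (col_mx b z) u.

Definition Hnorm2 (p : nat) (H : 'M[R]_(p + p + p)) (g : 'cV[R]_(p + p + p)) : R :=
  (g^T *m H *m g) 0 0.

End Defs.

(* Main.v *)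
Require Import Defs.
From HB Require Import structures.
From mathcomp Require Import all_boot all_order all_algebra.
From mathcomp Require Import all_classical all_reals all_analysis.
From mathcomp Require Import ring lra.
Import Order.TTheory GRing.Theory Num.Theory.
Import numFieldNormedType.Exports.
Local Open Scope classical_set_scope.
Local Open Scope ring_scope.
Set Implicit Arguments. Unset Strict Implicit. Unset Printing Implicit Defensive.


Section Scalar.
Variable R : realType.
Implicit Types a b w x tau : R.

Definition sf tau w : R := Num.sg w * Num.max (`|w| - tau) 0.

Lemma sfE tau w : 0 < tau ->
  sf tau w = if tau < w then w - tau else if w < - tau then w + tau else 0.
Proof.
move=> t0; rewrite /sf.
have [w0|w0|->] := ltrgtP w 0.
- rewrite ltr0_sg // ltr0_norm //.
  case: ifP => h1; first by lra.
  case: ifP => h2.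
    rewrite max_l; [ring | lra].
  rewrite max_r; [ring | lra].
- rewrite gtr0_sg // gtr0_norm //.
  case: ifP => h1.
    rewrite max_l; [ring | lra].
  case: ifP => h2; first by lra.
  rewrite max_r; [ring | lra].
- rewrite sgr0 mul0r; case: ifP => h1; first by lra.
  by case: ifP => h2 //; lra.
Qed.

Lemma sf_sub tau w x : 0 < tau ->
  tau * `|sf tau w| + (w - sf tau w) * (x - sf tau w) <= tau * `|x|.
Proof.
move=> t0; rewrite sfE //.
have hx1 := ler_norm x; have hx2 : - x <= `|x| by rewrite -normrN ler_norm.
case: ifP => h1.
  rewrite gtr0_norm; last by lra.
  nra.
case: ifP => h2.
  rewrite ltr0_norm; last by lra.
  nra.
rewrite normr0; nra.
Qed.

Lemma sf_sub_eta eta w x : 0 < eta ->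
  `|sf eta^-1 w| + eta * (w - sf eta^-1 w) * (x - sf eta^-1 w) <= `|x|.
Proof.
move=> e0; have ti : 0 < eta^-1 by rewrite invr_gt0.
have := sf_sub w x ti.
set s := sf _ _ => H.
have -> : `|s| + eta * (w - s) * (x - s) = eta * (eta^-1 * `|s| + (w - s) * (x - s)).
  by field; exact: lt0r_neq0.
have -> : `|x| = eta * (eta^-1 * `|x|) by field; exact: lt0r_neq0.
by rewrite ler_pM2l.
Qed.

Lemma sf_mono tau a b : 0 < tau -> b <= a -> 0 <= sf tau a - sf tau b <= a - b.
Proof.
move=> t0 ab; rewrite !sfE //.
by repeat case: ifP => ?; apply/andP; split; lra.
Qed.

Lemma sq_le_of (d e : R) : 0 <= d <= e -> d ^+ 2 <= e ^+ 2.
Proof. by case/andP => h1 h2; nra. Qed.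

Lemma sf_lip tau a b : 0 < tau -> (sf tau a - sf tau b) ^+ 2 <= (a - b) ^+ 2.
Proof.
move=> t0; have [ab|ab] := lerP b a.
  exact/sq_le_of/sf_mono.
have -> : (sf tau a - sf tau b) ^+ 2 = (sf tau b - sf tau a) ^+ 2 by ring.
have -> : (a - b) ^+ 2 = (b - a) ^+ 2 by ring.
by apply/sq_le_of/sf_mono => //; lra.
Qed.

Definition cl c w : R := Num.min (Num.max w (- c)) c.

Lemma clE c w : 0 <= c ->
  cl c w = if w < - c then - c else if c < w then c else w.
Proof.
move=> c0; rewrite /cl.
case: ifP => h1.
  rewrite max_r; last by lra.
  by rewrite min_l //; lra.
rewrite max_l; last by lra.
case: ifP => h2; first by rewrite min_r //; lra.
by rewrite min_l //; lra.
Qed.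

Lemma cl_in c w : 0 <= c -> `|cl c w| <= c.
Proof.
move=> c0; rewrite clE // ler_norml.
by repeat case: ifP => ?; apply/andP; split; lra.
Qed.

Lemma cl_proj c w x : 0 <= c -> `|x| <= c -> (x - cl c w) * (w - cl c w) <= 0.
Proof.
move=> c0; rewrite ler_norml => /andP[h1 h2]; rewrite clE //.
case: ifP => ?; first by nra.
case: ifP => ?; first by nra.
nra.
Qed.

Lemma cl_mono c a b : 0 <= c -> b <= a -> 0 <= cl c a - cl c b <= a - b.
Proof.
move=> c0 ab; rewrite !clE //.
by repeat case: ifP => ?; apply/andP; split; lra.
Qed.

Lemma cl_lip c a b : 0 <= c -> (cl c a - cl c b) ^+ 2 <= (a - b) ^+ 2.
Proof.
move=> c0; have [ab|ab] := lerP b a.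
  exact/sq_le_of/cl_mono.
have -> : (cl c a - cl c b) ^+ 2 = (cl c b - cl c a) ^+ 2 by ring.
have -> : (a - b) ^+ 2 = (b - a) ^+ 2 by ring.
by apply/sq_le_of/cl_mono => //; lra.
Qed.

End Scalar.


Section IP.
Variables (R : realType) (p : nat).
Implicit Types v w x : 'cV[R]_p.

Definition ip v w : R := \sum_i v i 0 * w i 0.

Lemma ipC v w : ip v w = ip w v.
Proof. by apply: eq_bigr => i _; rewrite mulrC. Qed.

Lemma ipDl v w x : ip (v + w) x = ip v x + ip w x.
Proof. by rewrite /ip -big_split; apply: eq_bigr => i _; rewrite !mxE mulrDl. Qed.

Lemma ipDr v w x : ip x (v + w) = ip x v + ip x w.
Proof. by rewrite ipC ipDl !(ipC x). Qed.

Lemma ipNl v w : ip (- v) w = - ip v w.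
Proof. by rewrite /ip -sumrN; apply: eq_bigr => i _; rewrite !mxE mulNr. Qed.

Lemma ipNr v w : ip v (- w) = - ip v w.
Proof. by rewrite ipC ipNl ipC. Qed.

Lemma ipBl v w x : ip (v - w) x = ip v x - ip w x.
Proof. by rewrite ipDl ipNl. Qed.

Lemma ipBr v w x : ip x (v - w) = ip x v - ip x w.
Proof. by rewrite ipDr ipNr. Qed.

Lemma ipZl (k : R) v w : ip (k *: v) w = k * ip v w.
Proof. by rewrite /ip mulr_sumr; apply: eq_bigr => i _; rewrite !mxE mulrA. Qed.

Lemma ipZr (k : R) v w : ip v (k *: w) = k * ip v w.
Proof. by rewrite ipC ipZl ipC. Qed.

Lemma ip0l v : ip 0 v = 0.
Proof. by rewrite /ip big1 // => i _; rewrite mxE mul0r. Qed.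

Lemma ip0r v : ip v 0 = 0.
Proof. by rewrite ipC ip0l. Qed.

Lemma ip_mul (M : 'M[R]_p) v w : ip (M *m v) w = ip v (M^T *m w).
Proof.
rewrite /ip.
under eq_bigr do rewrite mxE big_distrl /=.
under [RHS]eq_bigr do rewrite mxE big_distrr /=.
rewrite exchange_big /=; apply: eq_bigr => i _; apply: eq_bigr => j _.
by rewrite mxE; ring.
Qed.

Lemma ip_ge0 v : 0 <= ip v v.
Proof. by apply: sumr_ge0 => i _; rewrite -expr2 sqr_ge0. Qed.

Lemma ip_eq0 v : ip v v = 0 -> v = 0.
Proof.
move=> /eqP; rewrite psumr_eq0; last by move=> i _; rewrite -expr2 sqr_ge0.
move=> /allP H; apply/matrixP => i j; rewrite (ord1 j) mxE.
have := H i (mem_index_enum _); rewrite implyTb -expr2 sqrf_eq0.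
by move/eqP.
Qed.

Lemma ip_entry_le v i : (v i 0) ^+ 2 <= ip v v.
Proof.
rewrite /ip (bigD1 i) //= -expr2 lerDl.
by apply: sumr_ge0 => j _; rewrite -expr2 sqr_ge0.
Qed.

Lemma ip_sqD v w : ip (v + w) (v + w) <= 2 * ip v v + 2 * ip w w.
Proof.
have := ip_ge0 (v - w).
rewrite ?(ipDl,ipDr,ipNl,ipNr) (ipC w v); lra.
Qed.

Lemma ip_sqD3 v w x : ip (v + w + x) (v + w + x) <= 3 * (ip v v + ip w w + ip x x).
Proof.
have := ip_ge0 (v - w); have := ip_ge0 (v - x); have := ip_ge0 (w - x).
rewrite ?(ipDl,ipDr,ipNl,ipNr) (ipC w v) (ipC x v) (ipC x w); lra.
Qed.

Lemma ip_le2 v w : 2 * ip v w <= ip v v + ip w w.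
Proof. have := ip_ge0 (v - w); rewrite ?(ipDl,ipDr,ipNl,ipNr) (ipC w v); lra. Qed.

Lemma ip_trmx v w : (v^T *m w) 0 0 = ip v w.
Proof. by rewrite mxE; apply: eq_bigr => i _; rewrite mxE. Qed.

Lemma NZ (k : R) v : ip (k *: v) (k *: v) = k ^+ 2 * ip v v.
Proof. by rewrite ipZl ipZr mulrA expr2. Qed.

End IP.

Lemma ip_col (R : realType) (m n : nat) (x x' : 'cV[R]_m) (y y' : 'cV[R]_n) :
  ip (col_mx x y) (col_mx x' y') = ip x x' + ip y y'.
Proof.
rewrite /ip big_split_ord /=; congr (_ + _); apply: eq_bigr => i _.
  by rewrite !col_mxEu.
by rewrite !col_mxEd.
Qed.



Section Ana.
Variables (R : realType) (m : nat).

Lemma entry_le_norm (x : 'rV[R]_m) i : `|x 0 i| <= `|x|.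
Proof.
rewrite [leRHS]/Num.norm /= mx_normrE.
by apply: le_trans (le_bigmax _ _ (0, i)).
Qed.

Lemma cluster_exists (w : nat -> 'cV[R]_m) (M : R) :
  (forall t, ip (w t) (w t) <= M) ->
  exists l, forall d, 0 < d -> forall T, exists2 t, (T <= t)%N & ip (w t - l) (w t - l) < d.
Proof.
move=> hM.
pose x t := (w t)^T.
pose B := [set v : 'rV[R]_m | forall i, `[(- (M + 1)), M + 1]%classic (v ord0 i)].
have cB : compact B.
  exact: (@rV_compact _ _ (fun=> `[(- (M + 1)), M + 1]%classic) (fun _ => @segment_compact R _ _)).
have FB : (x @ \oo) B.
  exists 0%N => // t _ i; rewrite /= in_itv /= -ler_norml mxE.
  have := ip_entry_le (w t) i; have := hM t.
  have := sqr_ge0 (`|w t i 0| - 1); have := real_normK (num_real (w t i 0)).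
  have := normr_ge0 (w t i 0); have := ip_ge0 (w t); nra.
have [lr [_ clr]] := cB _ _ FB.
exists lr^T => d d0 T.
pose e := Num.min 1 (d / (m%:R + 1)).
have m1 : 0 < m%:R + 1 :> R by apply: ltr_wpDl.
have e0 : 0 < e by rewrite lt_min ltr01 /= divr_gt0.
have := clr [set v | exists2 t, (T <= t)%N & v = x t] (ball lr e).
case.
- by exists T => // t /= Tt; exists t.
- exact: nbhsx_ballx.
move=> v [[t Tt ->]] /= hb; exists t => //.
have hi i : `|(w t - lr^T) i 0| < e.
  rewrite !mxE distrC; move: hb; rewrite -ball_normE /ball_ /= => hb.
  by have := entry_le_norm (lr - x t) i; rewrite !mxE => h; apply: le_lt_trans h hb.
have : ip (w t - lr^T) (w t - lr^T) <= m%:R * e ^+ 2.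
  have -> : m%:R * e ^+ 2 = \sum_(i < m) e ^+ 2 by rewrite sumr_const card_ord mulr_natl.
  rewrite /ip; apply: ler_sum => i _.
  have := hi i; have := normr_ge0 ((w t - lr^T) i 0); have := real_normK (num_real ((w t - lr^T) i 0)).
  rewrite -expr2; nra.
have e1 : e <= 1 by rewrite ge_min lexx.
have e2 : e <= d / (m%:R + 1) by rewrite ge_min lexx orbT.
have : m%:R * e ^+ 2 <= m%:R * e.
  by apply: ler_wpM2l => //; rewrite expr2 ger_pMr.
have : m%:R * e <= m%:R * (d / (m%:R + 1)) by exact: ler_wpM2l.
have : m%:R * (d / (m%:R + 1)) < d.
  rewrite mulrA ltr_pdivrMr // mulrC ltr_pM2l //; lra.
lra.
Qed.


Lemma cvg_of_ip (w : nat -> 'cV[R]_m) l :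
  (forall d, 0 < d -> exists T, forall t, (T <= t)%N -> ip (w t - l) (w t - l) < d) ->
  w t @[t --> \oo] --> l.
Proof.
move=> H; apply/cvgrPdist_lt => e e0.
have [T hT] := H (e ^+ 2) (exprn_gt0 2 e0).
exists T => // t /= Tt.
rewrite /Num.norm /= mx_normrE; apply/bigmax_ltP; split => // -[i j] _ /=.
rewrite (ord1 j).
have := ip_entry_le (w t - l) i; have := hT t Tt.
have -> : `|(l - w t) i 0| = `|(w t - l) i 0| by rewrite !mxE distrC.
have := normr_ge0 ((w t - l) i 0); have := real_normK (num_real ((w t - l) i 0)).
nra.
Qed.

End Ana.


Section Core.
Variables (R : realType) (p : nat) (A : 'M[R]_p) (c : 'cV[R]_p) (c0 mu eta : R).
Hypotheses (symA : A^T = A) (c0ge : 0 <= c0) (mu_gt0 : 0 < mu) (eta_gt0 : 0 < eta).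
Implicit Types b z u x : 'cV[R]_p.

Definition inZ z := forall i, `|z i 0| <= c0.
Definition res b z := A *m b - z - c.

Definition opt b z u :=
  [/\ (forall x, norm1 b + ip (A *m u) (x - b) <= norm1 x), inZ z,
      (forall x, inZ x -> 0 <= ip u (x - z)) & res b z = 0].

Definition step b0 z0 u0 b1 z1 u1 :=
  [/\ (forall x, norm1 b1 + ip (eta *: (b0 - b1) + A *m u0) (x - b1) <= norm1 x),
      inZ z1,
      (forall x, inZ x -> ip (mu *: (z0 - z1) - u0) (x - z1) <= 0) &
      u1 = u0 - (mu / 2) *: (2 *: res b1 z1 - res b0 z0)].

Definition Bf b z u b' z' u' :=
  eta * ip b b' + mu * ip z z' + (2 / mu) * ip u u'
  + ip (A *m b) u' + ip (A *m b') u - ip z u' - ip z' u.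

Definition Qf b z u := Bf b z u b z u.

Lemma ipA x y : ip (A *m x) y = ip (A *m y) x.
Proof. by rewrite ip_mul symA ipC. Qed.

Lemma norm1E x : norm1 x = \sum_i `|x i 0|.
Proof. by []. Qed.

Lemma alg_step b0 z0 u0 b1 z1 u1 :
  b1 = soft eta^-1 (b0 + eta^-1 *: (A *m u0)) ->
  z1 = clip c0 (z0 - mu^-1 *: u0) ->
  u1 = u0 - (mu / 2) *: (2 *: res b1 z1 - res b0 z0) ->
  step b0 z0 u0 b1 z1 u1.
Proof.
move=> hb hz hu; split => //.
- move=> x; rewrite !norm1E /ip -big_split /=; apply: ler_sum => i _.
  have hbi : b1 i 0 = sf eta^-1 ((b0 + eta^-1 *: (A *m u0)) i 0).
    by rewrite hb /soft mxE.
  have := sf_sub_eta ((b0 + eta^-1 *: (A *m u0)) i 0) (x i 0) eta_gt0.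
  rewrite -hbi !mxE; set w := \sum_j _.
  suff -> : eta * (b0 i 0 + eta^-1 * w - b1 i 0) = eta * (b0 i 0 - b1 i 0) + w by [].
  by field; exact: lt0r_neq0.
- by move=> i; rewrite hz /clip mxE; exact: cl_in.
- move=> x xZ; rewrite /ip; apply: sumr_le0 => i _.
  have hzi : z1 i 0 = cl c0 ((z0 - mu^-1 *: u0) i 0) by rewrite hz /clip mxE.
  have := cl_proj ((z0 - mu^-1 *: u0) i 0) c0ge (xZ i).
  rewrite -hzi !mxE.
  have -> : mu * (z0 i 0 - z1 i 0) - u0 i 0 = mu * (z0 i 0 + - (mu^-1 * u0 i 0) - z1 i 0).
    by field; exact: lt0r_neq0.
  move=> h; have : 0 <= mu by exact: ltW.
  nra.
Qed.

Lemma opt_step b z u : opt b z u -> step b z u b z u.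
Proof.
case=> h1 h2 h3 h4; split => //.
- by move=> x; rewrite subrr scaler0 add0r.
- by move=> x /h3; rewrite subrr scaler0 sub0r ipNl; lra.
- by rewrite h4 scaler0 subr0 scaler0 subr0.
Qed.

Lemma step_opt b z u : step b z u b z u -> opt b z u.
Proof.
case=> h1 h2 h3 h4; split => //.
- by move=> x; have := h1 x; rewrite subrr scaler0 add0r.
- by move=> x /h3; rewrite subrr scaler0 sub0r ipNl; lra.
- move: h4 => /eqP; rewrite -subr_eq0 opprB addrC subrK.
  have -> : 2 *: res b z - res b z = res b z.
    by rewrite scaler_nat mulr2n addrK.
  rewrite scaler_eq0 => /orP[|/eqP //].
  by rewrite mulf_eq0 invr_eq0 (negbTE (lt0r_neq0 mu_gt0)) /= pnatr_eq0.
Qed.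

Lemma core db dz du Db Dz Du :
  0 <= eta * ip Db db + ip (A *m (Du + du)) db ->
  0 <= mu * ip Dz dz - ip (Du + du) dz ->
  (2 / mu) * ip Du du + ip (A *m Db) du - ip Dz du = ip (A *m db) du - ip dz du ->
  0 <= Bf db dz du Db Dz Du.
Proof.
rewrite /Bf mulmxDr ipDl ipDl => h1 h2 h3.
rewrite (ipA Du db) (ipA du db) (ipC Dz dz) (ipC Db db) (ipC Du dz) (ipC du dz) in h1 h2.
rewrite (ipC du Du).
lra.
Qed.

Lemma resB b z b' z' : res b z - res b' z' = A *m (b - b') - (z - z').
Proof.
rewrite /res mulmxBr; apply/matrixP => i j; rewrite !mxE; ring.
Qed.

Lemma step_u b0 z0 u0 b1 z1 u1 :
  u1 = u0 - (mu / 2) *: (2 *: res b1 z1 - res b0 z0) ->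
  u0 - u1 = (mu / 2) *: (res b1 z1 - (A *m (b0 - b1) - (z0 - z1))).
Proof.
move=> ->; rewrite opprB addrC subrK; congr (_ *: _).
rewrite -resB scaler_nat mulr2n; apply/matrixP => i j; rewrite !mxE; ring.
Qed.

Lemma two_step b0 z0 u0 b1 z1 u1 b0' z0' u0' b1' z1' u1' :
  step b0 z0 u0 b1 z1 u1 -> step b0' z0' u0' b1' z1' u1' ->
  0 <= Bf (b1 - b1') (z1 - z1') (u1 - u1')
          ((b0 - b1) - (b0' - b1')) ((z0 - z1) - (z0' - z1')) ((u0 - u1) - (u0' - u1')).
Proof.
case=> hb hZ hz hu [hb' hZ' hz' hu'].
have vu : u0 - u1 - (u0' - u1') + (u1 - u1') = u0 - u0'.
  by apply/matrixP => i j; rewrite !mxE; ring.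
apply: core.
- have e1 := hb b1'; have e2 := hb' b1.
  rewrite -(opprB b1 b1') ipNr in e1.
  have : 0 <= ip ((eta *: (b0 - b1) + A *m u0) - (eta *: (b0' - b1') + A *m u0')) (b1 - b1').
    by rewrite ipBl; lra.
  have -> : (eta *: (b0 - b1) + A *m u0) - (eta *: (b0' - b1') + A *m u0') =
     eta *: (b0 - b1 - (b0' - b1')) + A *m (u0 - u1 - (u0' - u1') + (u1 - u1')).
    rewrite vu !mulmxDr !mulmxN; apply/matrixP => i j; rewrite !mxE; ring.
  by move=> H; rewrite ipDl ipZl in H.
- have e1 := hz z1' hZ'; have e2 := hz' z1 hZ.
  rewrite -(opprB z1 z1') ipNr in e1.
  have : 0 <= ip ((mu *: (z0 - z1) - u0) - (mu *: (z0' - z1') - u0')) (z1 - z1').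
    by rewrite ipBl; lra.
  have -> : (mu *: (z0 - z1) - u0) - (mu *: (z0' - z1') - u0') =
     mu *: (z0 - z1 - (z0' - z1')) - (u0 - u1 - (u0' - u1') + (u1 - u1')).
    rewrite vu; apply/matrixP => i j; rewrite !mxE; ring.
  by move=> H; rewrite ipBl ipZl in H.
- have E1 := step_u hu; have E2 := step_u hu'.
  have -> : u0 - u1 - (u0' - u1') = (mu / 2) *: (A *m (b1 - b1') - (z1 - z1')
        - (A *m (b0 - b1 - (b0' - b1')) - (z0 - z1 - (z0' - z1')))).
    rewrite E1 E2 /res ?(mulmxDr, mulmxN, mulmxBr); apply/matrixP => i j; rewrite !mxE; ring.
  rewrite ipZl mulrA.
  have -> : 2 / mu * (mu / 2) = 1 by field; exact: lt0r_neq0.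
  rewrite mul1r !ipBl; lra.
Qed.

Lemma fejer b0 z0 u0 b1 z1 u1 bs zs us :
  step b0 z0 u0 b1 z1 u1 -> opt bs zs us ->
  0 <= Bf (b1 - bs) (z1 - zs) (u1 - us) (b0 - b1) (z0 - z1) (u0 - u1).
Proof.
move=> h /opt_step h'; have := two_step h h'.
by rewrite !subrr !subr0.
Qed.

Lemma BfC b z u b' z' u' : Bf b z u b' z' u' = Bf b' z' u' b z u.
Proof. rewrite /Bf (ipC b) (ipC z) (ipC u); ring. Qed.

Lemma QfD b z u b' z' u' :
  Qf (b + b') (z + z') (u + u') = Qf b z u + 2 * Bf b z u b' z' u' + Qf b' z' u'.
Proof.
rewrite /Qf /Bf !mulmxDr !(ipDl, ipDr) (ipC b' b) (ipC z' z) (ipC u' u).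
rewrite (ipC (A *m b) u') (ipC (A *m b') u) (ipC z' u) (ipC z u').
ring.
Qed.

Lemma Qf_ident b z u :
  Qf b z u = (eta * ip b b - mu * ip (A *m b) (A *m b))
     + mu * ip (z - mu^-1 *: u) (z - mu^-1 *: u)
     + mu^-1 * ip (u + mu *: (A *m b)) (u + mu *: (A *m b)).
Proof.
rewrite /Qf /Bf !(ipDl, ipDr, ipBl, ipBr, ipZl, ipZr, ipNl, ipNr).
rewrite (ipC u z) (ipC u (A *m b)).
field; exact: lt0r_neq0.
Qed.

Hypothesis eta_ge1 : 1 <= eta.
Hypothesis ray : forall v, mu * ip (A *m v) (A *m v) <= (eta - 1) * ip v v.

Lemma Qf_lb b z u :
  [/\ ip b b <= Qf b z u, ip u u <= 2 * mu * eta * Qf b z u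
    & ip z z <= (2 + 4 * eta) / mu * Qf b z u].
Proof.
have hb := ray b.
set P := ip (u + mu *: (A *m b)) (u + mu *: (A *m b)).
set S := ip (z - mu^-1 *: u) (z - mu^-1 *: u).
have P0 : 0 <= P by exact: ip_ge0.
have S0 : 0 <= S by exact: ip_ge0.
have Q := Qf_ident b z u; rewrite -/P -/S in Q.
have bb0 := ip_ge0 b; have ab0 := ip_ge0 (A *m b).
have mi : 0 < mu^-1 by rewrite invr_gt0.
have mS : 0 <= mu * S by apply: mulr_ge0 => //; exact: ltW.
have mP : 0 <= mu^-1 * P by apply: mulr_ge0 => //; exact: ltW.
have hP : mu^-1 * P <= Qf b z u by lra.
have hS : mu * S <= Qf b z u by lra.
have hB : ip b b <= Qf b z u by lra.
have hu : ip u u <= 2 * P + 2 * (mu * (mu * ip (A *m b) (A *m b))).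
  have := ip_sqD (u + mu *: (A *m b)) (- (mu *: (A *m b))).
  rewrite -/P addrK ipNl ipNr opprK !ipZl !ipZr; lra.
have Pm : P <= mu * Qf b z u.
  have -> : P = mu * (mu^-1 * P) by field; exact: lt0r_neq0.
  by rewrite ler_pM2l.
have hu2 : ip u u <= 2 * mu * eta * Qf b z u.
  have : mu * (mu * ip (A *m b) (A *m b)) <= mu * ((eta - 1) * Qf b z u).
    rewrite ler_pM2l //; apply: le_trans hb _.
    by rewrite ler_wpM2l // subr_ge0.
  nra.
split => //.
have hz : ip z z <= 2 * S + 2 * ip (mu^-1 *: u) (mu^-1 *: u).
  have := ip_sqD (z - mu^-1 *: u) (mu^-1 *: u); rewrite subrK -/S; lra.
rewrite ipZl ipZr in hz.
have Sm : S <= mu^-1 * Qf b z u.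
  have -> : S = mu^-1 * (mu * S) by field; exact: lt0r_neq0.
  by rewrite ler_pM2l.
have -> : (2 + 4 * eta) / mu * Qf b z u =
   2 * (mu^-1 * Qf b z u) + 2 * (mu^-1 * (mu^-1 * (2 * mu * eta * Qf b z u))).
  by field; exact: lt0r_neq0.
have : mu^-1 * (mu^-1 * ip u u) <= mu^-1 * (mu^-1 * (2 * mu * eta * Qf b z u)).
  by rewrite !ler_pM2l.
lra.
Qed.

Lemma Qf_ge0 b z u : 0 <= Qf b z u.
Proof. by case: (Qf_lb b z u) => h _ _; exact: le_trans (ip_ge0 b) h. Qed.

Lemma Qf_ub b z u :
  Qf b z u <= (eta + (eta - 1) / mu + mu + 3 + 2 / mu) * (ip b b + ip z z + ip u u).
Proof.
have hb := ray b.
have h1 := ip_le2 (A *m b) u.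
have h2 := ip_le2 (- z) u; rewrite ipNl in h2.
have hab : ip (A *m b) (A *m b) <= (eta - 1) / mu * ip b b.
  have -> : ip (A *m b) (A *m b) = (mu * ip (A *m b) (A *m b)) / mu.
    by field; exact: lt0r_neq0.
  have -> : (eta - 1) / mu * ip b b = ((eta - 1) * ip b b) / mu by rewrite mulrAC.
  by rewrite ler_pM2r ?invr_gt0.
rewrite ipNl ipNr opprK in h2.
have bb := ip_ge0 b; have zz := ip_ge0 z; have uu := ip_ge0 u.
have e1 : 0 <= (eta - 1) / mu.
  by apply: divr_ge0; [rewrite subr_ge0 | exact: ltW].
have e2 : 0 <= 2 / mu by apply: divr_ge0 => //; exact: ltW.
rewrite /Qf /Bf.
move: e1 e2 hab; set k1 := (eta - 1) / mu; set k2 := 2 / mu => e1 e2 hab.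
have m0 := ltW mu_gt0.
have et0 : 0 <= eta by exact: le_trans ler01 eta_ge1.
have := mulr_ge0 et0 zz; have := mulr_ge0 et0 uu; have := mulr_ge0 e1 zz;
have := mulr_ge0 e1 uu; have := mulr_ge0 m0 bb; have := mulr_ge0 m0 uu;
have := mulr_ge0 e2 bb; have := mulr_ge0 e2 zz.
nra.
Qed.

Lemma split3 (x y w : 'cV[R]_p) : x - w = (x - y) + (y - w).
Proof. by rewrite addrA subrK. Qed.

Lemma fejer_Q b0 z0 u0 b1 z1 u1 bs zs us :
  step b0 z0 u0 b1 z1 u1 -> opt bs zs us ->
  Qf (b1 - bs) (z1 - zs) (u1 - us) + Qf (b0 - b1) (z0 - z1) (u0 - u1)
  <= Qf (b0 - bs) (z0 - zs) (u0 - us).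
Proof.
move=> h1 h2; have := fejer h1 h2.
rewrite (split3 b0 b1 bs) (split3 z0 z1 zs) (split3 u0 u1 us) (QfD (b0 - b1) (z0 - z1) (u0 - u1)) BfC.
lra.
Qed.

Lemma mono_Q b0 z0 u0 b1 z1 u1 b2 z2 u2 :
  step b0 z0 u0 b1 z1 u1 -> step b1 z1 u1 b2 z2 u2 ->
  Qf (b1 - b2) (z1 - z2) (u1 - u2) <= Qf (b0 - b1) (z0 - z1) (u0 - u1).
Proof.
move=> h1 h2; have := two_step h1 h2.
have e x y w : x - y = (y - w) + ((x - y) - (y - w)) by rewrite [RHS]addrC subrK.
move=> H; rewrite (e b0 b1 b2) (e z0 z1 z2) (e u0 u1 u2) (QfD (b1 - b2) (z1 - z2) (u1 - u2)).
have := Qf_ge0 (b0 - b1 - (b1 - b2)) (z0 - z1 - (z1 - z2)) (u0 - u1 - (u1 - u2)).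
lra.
Qed.

Section Seq.
Variables (b z u : nat -> 'cV[R]_p) (bs zs us : 'cV[R]_p).
Hypothesis hs : forall t, step (b t) (z t) (u t) (b t.+1) (z t.+1) (u t.+1).
Hypothesis ho : opt bs zs us.

Let D t := Qf (b t - b t.+1) (z t - z t.+1) (u t - u t.+1).
Let E t := Qf (b t - bs) (z t - zs) (u t - us).

Lemma E_mono t s : (t <= s)%N -> E s <= E t.
Proof.
move=> /subnK <-; elim: (s - t)%N => [|k IH] //=.
rewrite addSn; apply: le_trans IH.
have := fejer_Q (hs (k + t)) ho; have := Qf_ge0 (b (k + t) - b (k + t).+1)
  (z (k + t) - z (k + t).+1) (u (k + t) - u (k + t).+1).
rewrite /E; lra.
Qed.

Lemma D_mono t s : (t <= s)%N -> D s <= D t.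
Proof.
move=> /subnK <-; elim: (s - t)%N => [|k IH] //=.
rewrite addSn; apply: le_trans IH; exact: mono_Q.
Qed.

Lemma sumD k : \sum_(t < k) D t + E k <= E 0.
Proof.
elim: k => [|k IH]; first by rewrite big_ord0 add0r.
rewrite big_ord_recr /=; apply: le_trans IH.
have := fejer_Q (hs k) ho; rewrite /E /D; lra.
Qed.

Lemma rate T : T.+1%:R * D T <= E 0.
Proof.
have := sumD T.+1; have := Qf_ge0 (b T.+1 - bs) (z T.+1 - zs) (u T.+1 - us).
rewrite -/(E T.+1) => h0 h1.
have : T.+1%:R * D T <= \sum_(t < T.+1) D t.
  have -> : T.+1%:R * D T = \sum_(t < T.+1) D T by rewrite sumr_const card_ord mulr_natl.
  apply: ler_sum => t _; apply: D_mono; rewrite -ltnS; exact: ltn_ord.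
lra.
Qed.

End Seq.

Definition Lc := (eta - 1) / mu.

Lemma Lc_ge0 : 0 <= Lc.
Proof. by apply: divr_ge0; [rewrite subr_ge0 | exact: ltW]. Qed.

Lemma NA x : ip (A *m x) (A *m x) <= Lc * ip x x.
Proof.
have := ray x; rewrite /Lc.
have -> : ip (A *m x) (A *m x) = mu^-1 * (mu * ip (A *m x) (A *m x)).
  by field; exact: lt0r_neq0.
have -> : (eta - 1) / mu * ip x x = mu^-1 * ((eta - 1) * ip x x) by rewrite mulrAC mulrC.
by move=> h; rewrite ler_wpM2l // invr_ge0 ltW.
Qed.

Definition phb b z u := soft eta^-1 (b + eta^-1 *: (A *m u)).
Definition phz (b z u : 'cV[R]_p) := clip c0 (z - mu^-1 *: u).
Definition phu b z u := u - (mu / 2) *: (2 *: res (phb b z u) (phz b z u) - res b z).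

Lemma soft_lip tau x y : 0 < tau ->
  ip (soft tau x - soft tau y) (soft tau x - soft tau y) <= ip (x - y) (x - y).
Proof.
move=> t0; rewrite /ip; apply: ler_sum => i _; rewrite !mxE -!expr2.
exact: (sf_lip _ _ t0).
Qed.

Lemma clip_lip x y :
  ip (clip c0 x - clip c0 y) (clip c0 x - clip c0 y) <= ip (x - y) (x - y).
Proof.
rewrite /ip; apply: ler_sum => i _; rewrite !mxE -!expr2.
exact: (cl_lip _ _ c0ge).
Qed.

Lemma NsymB x y : ip (x - y) (x - y) = ip (y - x) (y - x).
Proof. by rewrite -opprB ipNl ipNr opprK. Qed.

Definition Kb := 2 + 2 * (eta^-1 ^+ 2 * Lc).
Definition Kz := 2 + 2 * mu^-1 ^+ 2.
Definition Ku := 6 * (1 + mu ^+ 2 * (Lc * Kb) + mu ^+ 2 * Kz) + 4 * ((mu / 2) ^+ 2 * Lc + (mu / 2) ^+ 2).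

Lemma Kb_ge0 : 0 <= Kb.
Proof. by rewrite /Kb; have := Lc_ge0; have := sqr_ge0 eta^-1; nra. Qed.
Lemma Kz_ge0 : 0 <= Kz.
Proof. by rewrite /Kz; have := sqr_ge0 mu^-1; nra. Qed.
Lemma Ku_ge0 : 0 <= Ku.
Proof.
rewrite /Ku; have := Lc_ge0; have := Kb_ge0; have := Kz_ge0.
have := sqr_ge0 mu; have := sqr_ge0 (mu / 2) => h1 h2 h3 h4 h5.
have := mulr_ge0 h5 h4; have := mulr_ge0 h2 (mulr_ge0 h5 h4); have := mulr_ge0 h1 h3.
have := mulr_ge0 h2 h3; nra.
Qed.

Lemma lip_bounds b z u b' z' u' d :
  ip (b - b') (b - b') <= d -> ip (z - z') (z - z') <= d -> ip (u - u') (u - u') <= d ->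
  [/\ ip (phb b z u - phb b' z' u') (phb b z u - phb b' z' u') <= Kb * d,
      ip (phz b z u - phz b' z' u') (phz b z u - phz b' z' u') <= Kz * d &
      ip (phu b z u - phu b' z' u') (phu b z u - phu b' z' u') <= Ku * d].
Proof.
move=> hb hz hu.
have d0 : 0 <= d by apply: le_trans hb; exact: ip_ge0.
have ei : 0 < eta^-1 by rewrite invr_gt0.
have HB : ip (phb b z u - phb b' z' u') (phb b z u - phb b' z' u') <= Kb * d.
  apply: le_trans (soft_lip _ _ ei) _.
  have -> : b + eta^-1 *: (A *m u) - (b' + eta^-1 *: (A *m u')) =
            (b - b') + eta^-1 *: (A *m (u - u')).
    by rewrite mulmxBr; apply/matrixP => i j; rewrite !mxE; ring.
  apply: le_trans (ip_sqD _ _) _; rewrite NZ.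
  have h1 := NA (u - u').
  have h2 : Lc * ip (u - u') (u - u') <= Lc * d by apply: ler_wpM2l => //; exact: Lc_ge0.
  have h3 : eta^-1 ^+ 2 * ip (A *m (u - u')) (A *m (u - u')) <= eta^-1 ^+ 2 * (Lc * d).
    by apply: ler_wpM2l; [exact: sqr_ge0 | exact: le_trans h1 h2].
  rewrite /Kb; lra.
have HZ : ip (phz b z u - phz b' z' u') (phz b z u - phz b' z' u') <= Kz * d.
  apply: le_trans (clip_lip _ _) _.
  have -> : z - mu^-1 *: u - (z' - mu^-1 *: u') = (z - z') + (- mu^-1) *: (u - u').
    by apply/matrixP => i j; rewrite !mxE; ring.
  apply: le_trans (ip_sqD _ _) _; rewrite NZ sqrrN.
  have h3 : mu^-1 ^+ 2 * ip (u - u') (u - u') <= mu^-1 ^+ 2 * d.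
    by apply: ler_wpM2l => //; exact: sqr_ge0.
  rewrite /Kz; lra.
split => //.
set db := phb b z u - phb b' z' u' in HB *; set dz := phz b z u - phz b' z' u' in HZ *.
have -> : phu b z u - phu b' z' u' =
   ((u - u') + (- mu) *: (A *m db) + mu *: dz)
   + ((mu / 2) *: (A *m (b - b')) + (- (mu / 2)) *: (z - z')).
  rewrite /phu /res /db /dz; move: (phb b z u) (phb b' z' u') (phz b z u) (phz b' z' u') => B1 B2 Z1 Z2.
  rewrite !mulmxBr; apply/matrixP => i j; rewrite !mxE; by field.
apply: le_trans (ip_sqD _ _) _.
have E1 := ip_sqD3 (u - u') ((- mu) *: (A *m db)) (mu *: dz).
have E2 := ip_sqD ((mu / 2) *: (A *m (b - b'))) ((- (mu / 2)) *: (z - z')).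
rewrite !NZ !sqrrN in E1 E2.
have s1 := sqr_ge0 mu; have s2 := sqr_ge0 (mu / 2).
have a1 : mu ^+ 2 * ip (A *m db) (A *m db) <= mu ^+ 2 * (Lc * (Kb * d)).
  apply: ler_wpM2l => //; apply: le_trans (NA db) _.
  by apply: ler_wpM2l => //; exact: Lc_ge0.
have a2 : mu ^+ 2 * ip dz dz <= mu ^+ 2 * (Kz * d) by apply: ler_wpM2l.
have a3 : (mu / 2) ^+ 2 * ip (A *m (b - b')) (A *m (b - b')) <= (mu / 2) ^+ 2 * (Lc * d).
  apply: ler_wpM2l => //; apply: le_trans (NA _) _.
  by apply: ler_wpM2l => //; exact: Lc_ge0.
have a4 : (mu / 2) ^+ 2 * ip (z - z') (z - z') <= (mu / 2) ^+ 2 * d by apply: ler_wpM2l.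
rewrite /Ku; lra.
Qed.

Lemma le0_of_small (r K : R) : 0 <= K -> (forall d, 0 < d -> r <= K * d) -> r <= 0.
Proof.
move=> K0 H; rewrite leNgt; apply/negP => x0.
have K1 : 0 < K + 1 by lra.
have := H (r / (K + 1)) (divr_gt0 x0 K1).
have : K * (r / (K + 1)) < r.
  rewrite mulrA ltr_pdivrMr //; nra.
lra.
Qed.

Lemma small_eq0 x (K : R) : 0 <= K -> (forall d, 0 < d -> ip x x <= K * d) -> x = 0.
Proof.
move=> K0 H; apply: ip_eq0; apply/eqP; rewrite eq_le ip_ge0 andbT.
exact: le0_of_small K0 H.
Qed.

Section Main.
Variables (b z u : nat -> 'cV[R]_p) (bs zs us : 'cV[R]_p).
Hypothesis alg : forall t,
  [/\ b t.+1 = phb (b t) (z t) (u t), z t.+1 = phz (b t) (z t) (u t) &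
      u t.+1 = phu (b t) (z t) (u t)].
Hypothesis ho : opt bs zs us.

Lemma hs t : step (b t) (z t) (u t) (b t.+1) (z t.+1) (u t.+1).
Proof. by case: (alg t) => h1 h2 h3; apply: alg_step; [exact: h1 | exact: h2 | rewrite h3 /phu -h1 -h2]. Qed.

Lemma fixpoint lb lz lu :
  (forall d, 0 < d -> exists t,
     [/\ ip (b t - lb) (b t - lb) <= d, ip (z t - lz) (z t - lz) <= d &
         ip (u t - lu) (u t - lu) <= d] /\
     [/\ ip (b t - b t.+1) (b t - b t.+1) <= d, ip (z t - z t.+1) (z t - z t.+1) <= d &
         ip (u t - u t.+1) (u t - u t.+1) <= d]) ->
  opt lb lz lu.
Proof.
move=> H.
have key (K : R) (ph : 'cV[R]_p -> 'cV[R]_p -> 'cV[R]_p -> 'cV[R]_p) (x : nat -> 'cV[R]_p) lx :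
  0 <= K -> (forall t, x t.+1 = ph (b t) (z t) (u t)) ->
  (forall t d, ip (lb - b t) (lb - b t) <= d -> ip (lz - z t) (lz - z t) <= d ->
     ip (lu - u t) (lu - u t) <= d ->
     ip (ph lb lz lu - ph (b t) (z t) (u t)) (ph lb lz lu - ph (b t) (z t) (u t)) <= K * d) ->
  (forall d, 0 < d -> exists t, [/\ ip (lb - b t) (lb - b t) <= d, ip (lz - z t) (lz - z t) <= d,
      ip (lu - u t) (lu - u t) <= d, ip (x t.+1 - x t) (x t.+1 - x t) <= d &
      ip (x t - lx) (x t - lx) <= d]) ->
  ph lb lz lu = lx.
  move=> K0 hx hK hd; apply/eqP; rewrite -subr_eq0; apply/eqP.
  apply: (@small_eq0 _ (3 * (K + 2))) => [|d d0]; first by lra.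
  have [t [h1 h2 h3 h4 h5]] := hd d d0.
  have -> : ph lb lz lu - lx = (ph lb lz lu - ph (b t) (z t) (u t)) + (x t.+1 - x t) + (x t - lx).
    by rewrite hx; apply/matrixP => i j; rewrite !mxE; ring.
  apply: le_trans (ip_sqD3 _ _ _) _.
  have := hK t d h1 h2 h3; lra.
have hb : phb lb lz lu = lb.
  apply: (key Kb phb b lb Kb_ge0) => [t|t d h1 h2 h3|d d0].
  - by case: (alg t).
  - by case: (lip_bounds h1 h2 h3).
  - have [t [[h1 h2 h3] [h4 h5 h6]]] := H d d0; exists t.
    by rewrite !(NsymB lb) !(NsymB lz) !(NsymB lu) (NsymB (b t.+1)).
have hz : phz lb lz lu = lz.
  apply: (key Kz phz z lz Kz_ge0) => [t|t d h1 h2 h3|d d0].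
  - by case: (alg t).
  - by case: (lip_bounds h1 h2 h3).
  - have [t [[h1 h2 h3] [h4 h5 h6]]] := H d d0; exists t.
    by rewrite !(NsymB lb) !(NsymB lz) !(NsymB lu) (NsymB (z t.+1)).
have hu : phu lb lz lu = lu.
  apply: (key Ku phu u lu Ku_ge0) => [t|t d h1 h2 h3|d d0].
  - by case: (alg t).
  - by case: (lip_bounds h1 h2 h3).
  - have [t [[h1 h2 h3] [h4 h5 h6]]] := H d d0; exists t.
    by rewrite !(NsymB lb) !(NsymB lz) !(NsymB lu) (NsymB (u t.+1)).
apply: step_opt; apply: alg_step.
- by rewrite -{1}hb.
- by rewrite -{1}hz.
- by rewrite -{1}hu /phu -/(phb _ _ _) hb hz.
Qed.

Definition Cq := 1 + 2 * mu * eta + (2 + 4 * eta) / mu.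
Definition Cup := eta + (eta - 1) / mu + mu + 3 + 2 / mu.

Lemma Cq_ge0 : 0 <= Cq.
Proof.
rewrite /Cq; have m0 := ltW mu_gt0; have e0 : 0 <= eta by exact: le_trans ler01 eta_ge1.
have : 0 <= (2 + 4 * eta) / mu by apply: divr_ge0 => //; lra.
have := mulr_ge0 m0 e0; nra.
Qed.

Lemma Cup_ge0 : 0 <= Cup.
Proof.
rewrite /Cup; have m0 := ltW mu_gt0; have e0 : 0 <= eta by exact: le_trans ler01 eta_ge1.
have := Lc_ge0; rewrite /Lc => h.
have : 0 <= 2 / mu by apply: divr_ge0 => //; lra.
lra.
Qed.

Lemma n3_le b0 z0 u0 :
  [/\ ip b0 b0 <= Cq * Qf b0 z0 u0, ip z0 z0 <= Cq * Qf b0 z0 u0 & ip u0 u0 <= Cq * Qf b0 z0 u0].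
Proof.
have [h1 h2 h3] := Qf_lb b0 z0 u0; have Q0 := Qf_ge0 b0 z0 u0.
have m0 := ltW mu_gt0; have e0 : 0 <= eta by exact: le_trans ler01 eta_ge1.
have k1 : 0 <= 2 * mu * eta by apply: mulr_ge0 => //; apply: mulr_ge0.
have k2 : 0 <= (2 + 4 * eta) / mu by apply: divr_ge0 => //; lra.
rewrite /Cq; split; nra.
Qed.

Lemma tail (a : R) : 0 <= a -> forall d, 0 < d -> exists T, forall t, (T <= t)%N -> a / t.+1%:R < d.
Proof.
move=> a0 d d0; exists (Num.trunc (a / d)) => t.
rewrite truncn_le_nat => h.
have t0 : 0 < t.+1%:R :> R by [].
move: h; rewrite ltr_pdivrMr // => h.
by rewrite ltr_pdivrMr // mulrC.
Qed.

Lemma main_conv : exists lb lz lu,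
  [/\ opt lb lz lu, b t @[t --> \oo] --> lb, z t @[t --> \oo] --> lz,
      u t @[t --> \oo] --> lu &
      forall T, Qf (b T - b T.+1) (z T - z T.+1) (u T - u T.+1)
                <= T.+1%:R^-1 * Qf (b 0 - lb) (z 0 - lz) (u 0 - lu)].
Proof.
set E0 := Qf (b 0 - bs) (z 0 - zs) (u 0 - us).
have E00 : 0 <= E0 by exact: Qf_ge0.
have Et t : Qf (b t - bs) (z t - zs) (u t - us) <= E0 by exact: (E_mono hs ho (leq0n t)).
pose w t := stack (b t) (z t) (u t).
pose M := 2 * (3 * (Cq * E0)) + 2 * (ip bs bs + ip zs zs + ip us us).
have wM t : ip (w t) (w t) <= M.
  have -> : w t = stack (b t - bs) (z t - zs) (u t - us) + stack bs zs us.
    by rewrite /w /stack !add_col_mx !subrK.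
  apply: le_trans (ip_sqD _ _) _; rewrite /stack !ip_col.
  have [h1 h2 h3] := n3_le (b t - bs) (z t - zs) (u t - us).
  have := Et t; have := Cq_ge0 => c0' ht.
  have : Cq * Qf (b t - bs) (z t - zs) (u t - us) <= Cq * E0 by exact: ler_wpM2l.
  rewrite /M; lra.
have [l hl] := cluster_exists wM.
set lb := usubmx (usubmx l); set lz := dsubmx (usubmx l); set lu := dsubmx l.
have wl t : ip (w t - l) (w t - l) =
    ip (b t - lb) (b t - lb) + ip (z t - lz) (z t - lz) + ip (u t - lu) (u t - lu).
  have -> : l = stack lb lz lu by rewrite /stack /lb /lz /lu !vsubmxK.
  by rewrite /w /stack !opp_col_mx !add_col_mx !ip_col.
have Dt t : Qf (b t - b t.+1) (z t - z t.+1) (u t - u t.+1) <= E0 / t.+1%:R.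
  have := rate hs ho t; rewrite -/E0 => h.
  by rewrite ler_pdivlMr // mulrC.
have Dsmall d : 0 < d -> exists T, forall t, (T <= t)%N ->
   [/\ ip (b t - b t.+1) (b t - b t.+1) <= d, ip (z t - z t.+1) (z t - z t.+1) <= d &
       ip (u t - u t.+1) (u t - u t.+1) <= d].
  move=> d0; have [T hT] := tail (mulr_ge0 Cq_ge0 E00) d0.
  exists T => t Tt; have h5 := hT t Tt.
  have [h1 h2 h3] := n3_le (b t - b t.+1) (z t - z t.+1) (u t - u t.+1).
  have h4 : Cq * Qf (b t - b t.+1) (z t - z t.+1) (u t - u t.+1) <= Cq * E0 / t.+1%:R.
    by rewrite -mulrA; apply: ler_wpM2l; [exact: Cq_ge0 | exact: Dt].
  have h6 := ltW (le_lt_trans h4 h5).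
  by split; [exact: le_trans h1 h6 | exact: le_trans h2 h6 | exact: le_trans h3 h6].
have optl : opt lb lz lu.
  apply: fixpoint => d d0.
  have [T hT] := Dsmall d d0.
  have [t Tt ht] := hl d d0 T.
  exists t; split; last by exact: hT.
  have := ip_ge0 (b t - lb); have := ip_ge0 (z t - lz); have := ip_ge0 (u t - lu).
  rewrite wl in ht; split; lra.
have conv d : 0 < d -> exists T, forall t, (T <= t)%N ->
   [/\ ip (b t - lb) (b t - lb) < d, ip (z t - lz) (z t - lz) < d & ip (u t - lu) (u t - lu) < d].
  move=> d0; set k := Cq * Cup + 1.
  have k0 : 0 < k by rewrite /k; have := mulr_ge0 Cq_ge0 Cup_ge0; lra.
  have [t0 _ ht0] := hl (d / k) (divr_gt0 d0 k0) 0%N.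
  exists t0 => t tt; rewrite wl in ht0.
  have Q0 : Qf (b t0 - lb) (z t0 - lz) (u t0 - lu) <= Cup * (d / k).
    apply: le_trans (Qf_ub _ _ _) _; apply: ler_wpM2l; [exact: Cup_ge0 | exact: ltW].
  have Qt := E_mono hs optl tt.
  have [h1 h2 h3] := n3_le (b t - lb) (z t - lz) (u t - lu).
  have : Cq * Qf (b t - lb) (z t - lz) (u t - lu) <= Cq * (Cup * (d / k)).
    by apply: ler_wpM2l; [exact: Cq_ge0 | exact: le_trans Qt Q0].
  have h5 : Cq * (Cup * (d / k)) < d.
    have -> : Cq * (Cup * (d / k)) = (Cq * Cup) * d / k by rewrite !mulrA.
    rewrite ltr_pdivrMr //.
    have -> : d * k = Cq * Cup * d + d by rewrite /k; ring.
    by rewrite ltrDl.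
  move=> h4; have h6 := ltW (le_lt_trans h4 h5).
  by split; [exact: le_lt_trans h1 (le_lt_trans h4 h5) | exact: le_lt_trans h2 (le_lt_trans h4 h5) | exact: le_lt_trans h3 (le_lt_trans h4 h5)].
exists lb, lz, lu; split => //.
- apply: cvg_of_ip => d d0; have [T hT] := conv d d0.
  by exists T => t /hT [].
- apply: cvg_of_ip => d d0; have [T hT] := conv d d0.
  by exists T => t /hT [].
- apply: cvg_of_ip => d d0; have [T hT] := conv d d0.
  by exists T => t /hT [].
- move=> T; have := rate hs optl T => h.
  by rewrite mulrC ler_pdivlMr // mulrC.
Qed.

End Main.

End Core.


Section Cont.
Variables (R : realType) (T : topologicalType).

Lemma cont_sum (I : Type) (r : seq I) (F : I -> T -> R) :
  (forall i, continuous (F i)) -> continuous (fun x => \sum_(i <- r) F i x).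
Proof.
move=> hF; elim: r => [|a r IH].
  have -> : (fun x => \sum_(i <- [::]) F i x) = (fun=> 0) by apply/funext => x; rewrite big_nil.
  exact: cst_continuous.
have -> : (fun x => \sum_(i <- a :: r) F i x) = (F a + (fun x => \sum_(i <- r) F i x))%R.
  by apply/funext => x; rewrite big_cons.
by move=> x; apply: continuousD; [exact: hF | exact: IH].
Qed.

Lemma cont_mul (f g : T -> R) : continuous f -> continuous g -> continuous (fun x => f x * g x).
Proof. by move=> hf hg x; apply: continuousM; [exact: hf | exact: hg]. Qed.

End Cont.

Section Rayleigh.
Variables (R : realType) (p : nat) (M : 'M[R]_p).
Hypothesis symM : M^T = M.

Let F (v : 'cV[R]_p) := ip v (M *m v).

Lemma FD v w : F (v + w) = F v + 2 * ip (M *m v) w + F w.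
Proof.
rewrite /F mulmxDr !(ipDl, ipDr) (ipC v (M *m w)) ip_mul symM (ipC w (M *m v)).
ring.
Qed.

Lemma FZ k v : F (k *: v) = k ^+ 2 * F v.
Proof. by rewrite /F -scalemxAr ipZl ipZr expr2 mulrA. Qed.

Lemma ip_pos_norm (v : 'cV[R]_p) : v != 0 -> 0 < ip v v.
Proof.
move=> hv; rewrite lt_def ip_ge0 andbT; apply/eqP => /ip_eq0 h.
by rewrite h eqxx in hv.
Qed.

Lemma normalize (v : 'cV[R]_p) : v != 0 ->
  let s := Num.sqrt (ip v v) in 0 < s /\ ip (s^-1 *: v) (s^-1 *: v) = 1.
Proof.
move=> hv s; have h0 := ip_pos_norm hv.
have s0 : 0 < s by rewrite sqrtr_gt0.
split => //; rewrite ipZl ipZr mulrA -expr2 exprVn sqr_sqrtr; last exact: ltW.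
by rewrite mulVf // lt0r_neq0.
Qed.

Lemma rayleigh_gen l : is_lambda_max M l -> forall v, F v <= l * ip v v.
Proof.
case=> eigl maxl.
pose N (x : 'rV[R]_p) := ip x^T x^T.
pose f (x : 'rV[R]_p) := ip x^T (M *m x^T).
have ctr i : continuous (fun x : 'rV[R]_p => x^T i 0).
  have -> : (fun x : 'rV[R]_p => x^T i 0) = (fun x => x 0 i).
    by apply/funext => x; rewrite mxE.
  exact: coord_continuous.
have cN : continuous N.
  by apply: cont_sum => i; apply: cont_mul; apply: ctr.
have cf : continuous f.
  apply: cont_sum => i; apply: cont_mul; first exact: ctr.
  have -> : (fun x : 'rV[R]_p => (M *m x^T) i 0) = (fun x => \sum_j M i j * x^T j 0).
    by apply/funext => x; rewrite mxE.
  apply: cont_sum => j; apply: cont_mul; first exact: cst_continuous.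
  exact: ctr.
pose S := [set x : 'rV[R]_p | N x = 1].
have S0 : S !=set0.
  case/eigenvalueP: eigl => v0 _ v0n0.
  have v0T : v0^T != 0 by apply: contraNneq v0n0 => /eqP; rewrite trmx_eq0.
  have [_ h] := normalize v0T.
  by exists ((Num.sqrt (ip v0^T v0^T))^-1 *: v0^T)^T; rewrite /S /N /= trmxK.
have cS : compact S.
  apply: (@subclosed_compact _ S [set v : 'rV[R]_p | forall i, `[(-1 : R), 1]%classic (v ord0 i)]).
  - have -> : S = N @^-1` [set x | x = 1] by [].
    have H := (continuous_closedP N).1 cN. have H2 := H _ (@closed_eq R 1). exact: H2.
  - exact: (@rV_compact _ _ (fun=> `[(-1 : R), 1]%classic) (fun _ => @segment_compact R _ _)).
  - move=> x; rewrite /S /= => Nx i; rewrite /= in_itv /= -ler_norml.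
    have := ip_entry_le x^T i; rewrite -/(N x) Nx mxE.
    move=> h; rewrite -(expr_le1 (n := 2)) //; by rewrite real_normK ?num_real.
have [c cSc cmax] := compact_EVT_max S0 cS (continuous_subspaceT cf).
have Nc : N c = 1 by move: cSc; rewrite inE.
set m := f c.
have cl1 v : F v <= m * ip v v.
  have [->|hv] := eqVneq v 0.
    by rewrite /F ip0l ip0r mulr0.
  have [s0 hs] := normalize hv.
  move: s0 hs; set s := Num.sqrt _ => s0 hs.
  have hy : ((s^-1 *: v)^T) \in S by rewrite inE /S /N /= trmxK.
  have := cmax _ hy; rewrite /f trmxK -/(F _) FZ -/m => h.
  rewrite -(sqr_sqrtr (ip_ge0 v)) -/s.
  have -> : F v = (s^-1 ^+ 2 * F v) * s ^+ 2.
    by field; exact: lt0r_neq0.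
  by apply: ler_wpM2r => //; exact: sqr_ge0.
pose v := c^T.
have Fv : F v = m by [].
have Nv : ip v v = 1 by [].
have [w ew] : {w | w = M *m v - m *: v} by eexists.
have ha : ip (M *m v) w = ip w w + m * ip v w by rewrite {2}ew ipBl ipZl; ring.
have K0 := cl1 w.
have key t : 2 * t * ip w w <= t ^+ 2 * (m * ip w w - F w).
  have := cl1 (v + t *: w).
  rewrite FD FZ Fv ipZr !(ipDl, ipDr, ipZl, ipZr) Nv (ipC w v) ha.
  move=> H; lra.
have a0 : ip w w = 0.
  apply/eqP; rewrite eq_le ip_ge0 andbT; rewrite leNgt; apply/negP => apos.
  set a := ip w w in apos key K0; set k := m * a - F w.
  have k0 : 0 <= k by rewrite /k; lra.
  have := key (a / (k + 1)).
  have k1 : 0 < k + 1 by lra.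
  have -> : 2 * (a / (k + 1)) * a = (a / (k + 1)) * (2 * a) by ring.
  have -> : (a / (k + 1)) ^+ 2 * k = (a / (k + 1)) * (a / (k + 1) * k) by ring.
  have t0 : 0 < a / (k + 1) by apply: divr_gt0.
  rewrite ler_pM2l // => h.
  have : a / (k + 1) * k <= a.
    rewrite mulrAC ler_pdivrMr //; nra.
  lra.
have w0 : w = 0 by apply: ip_eq0.
have eig : eigenvalue M m.
  apply/eigenvalueP; exists c.
    have : M *m v = m *: v by apply/eqP; rewrite -subr_eq0 -ew w0.
    move=> /(congr1 trmx); rewrite trmx_mul symM trmxK linearZ /= trmxK.
    by [].
  apply/eqP => c0; move: Nc; rewrite c0 /N trmx0 ip0l => /eqP.
  by rewrite eq_sym oner_eq0.
move=> u; apply: le_trans (cl1 u) _.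
by apply: ler_wpM2r; [exact: ip_ge0 | exact: maxl].
Qed.

End Rayleigh.

Lemma rayleigh (R : realType) (p : nat) (M : 'M[R]_p) l : M^T = M -> is_lambda_max M l ->
  forall v, ip v (M *m v) <= l * ip v v.
Proof. by move=> h1 h2 v; exact: (rayleigh_gen h1 h2 v). Qed.


Lemma e00D (R : realType) (M1 M2 : 'M[R]_1) : (M1 + M2) 0 0 = M1 0 0 + M2 0 0.
Proof. by rewrite mxE. Qed.

Lemma Hnorm2_stack (R : realType) n p (X : 'M[R]_(n, p)) (mu eta : R) (b z u : 'cV[R]_p) :
  mu != 0 ->
  Hnorm2 (Hmat X mu eta) (stack b z u) = Qf (X^T *m X) mu eta b z u.
Proof.
move=> mu0.
set A := X^T *m X.
have symA : A^T = A by rewrite /A trmx_mul trmxK.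
rewrite /Hnorm2 /Hmat /stack -/A symA -mulmxA.
rewrite !mul_block_col !mul_col_mx !mul_row_col.
rewrite !tr_col_mx !add_col_mx !mul_row_col.
rewrite !mul0mx !addr0 !add0r [mu *: _ + _]addrC subrK !mul_scalar_mx mulNmx !mul1mx.
rewrite !mulmxDr !e00D !ip_trmx.
rewrite !(ipDr, ipZr, ipNr) mulNmx mul1mx ipNr.
rewrite /Qf /Bf (ipC u (A *m b)) (ipC u z) ip_mul symA (ipC b (A *m u)).
ring.
Qed.

Lemma stackB (R : realType) p (b z u b' z' u' : 'cV[R]_p) :
  stack b z u - stack b' z' u' = stack (b - b') (z - z') (u - u').
Proof. by rewrite /stack !opp_col_mx !add_col_mx. Qed.

Section Lag.
Variables (R : realType) (n p : nat) (X : 'M[R]_(n, p)) (y : 'cV[R]_n) (lam : R).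
Hypothesis lam0 : 0 <= lam.
Let A := X^T *m X.
Let c := X^T *m y.
Let c0 := n%:R * lam.

Lemma c00 : 0 <= c0.
Proof. by rewrite /c0 mulr_ge0. Qed.

Lemma symA' : A^T = A.
Proof. by rewrite /A trmx_mul trmxK. Qed.

Lemma inZP (z : 'cV[R]_p) : reflect (inZ c0 z) [forall i, `|z i 0| <= n%:R * lam].
Proof. by apply: (iffP forallP). Qed.

Lemma L_fin (beta z u : 'cV[R]_p) : inZ c0 z ->
  lagrangian X y lam beta z u = (norm1 beta - ip u (res A c beta z))%:E.
Proof.
move=> /inZP hz; rewrite /lagrangian /deltaZ0 hz ip_trmx adde0 -EFinD.
by [].
Qed.

Lemma L_inf (beta z u : 'cV[R]_p) : ~ inZ c0 z -> lagrangian X y lam beta z u = +oo%E.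
Proof.
move=> hz; rewrite /lagrangian /deltaZ0.
case: (inZP z) => // _; rewrite addey // addye //.
Qed.

Lemma resD (beta z bs zs : 'cV[R]_p) : res A c bs zs = 0 ->
  res A c beta z = A *m (beta - bs) - (z - zs).
Proof.
move=> h; rewrite -[LHS]subr0 -h /res mulmxBr.
by apply/matrixP => i j; rewrite !mxE; ring.
Qed.

Lemma ipAs (x w : 'cV[R]_p) : ip w (A *m x) = ip (A *m w) x.
Proof. by rewrite [RHS]ip_mul symA'. Qed.

Lemma saddle_opt (bs zs us : 'cV[R]_p) : saddle X y lam bs zs us -> opt A c c0 bs zs us.
Proof.
move=> hs.
have Z0 : inZ c0 (0 : 'cV[R]_p) by move=> i; rewrite mxE normr0 c00.
have hz : inZ c0 zs.
  apply/(elimT (inZP zs))/negPn/negP => /inZP hn.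
  have := (hs 0 0 us).2; rewrite (L_inf _ _ (fun h => hn h)) (L_fin _ _ Z0).
  by rewrite leye_eq.
have hr : res A c bs zs = 0.
  have := (hs 0 0 (us - res A c bs zs)).1; rewrite !L_fin // lee_fin.
  rewrite ipBl => h; apply: ip_eq0; apply/eqP; rewrite eq_le ip_ge0 andbT; lra.
split => //.
- move=> x; have := (hs x zs us).2; rewrite !L_fin // lee_fin hr ip0r subr0.
  by rewrite (resD _ _ hr) subrr subr0 ipAs; lra.
- move=> x hx; have := (hs bs x us).2; rewrite !L_fin // lee_fin hr ip0r subr0.
  by rewrite (resD _ _ hr) subrr mulmx0 sub0r ipNr; lra.
Qed.

Lemma opt_saddle (bs zs us : 'cV[R]_p) : opt A c c0 bs zs us -> saddle X y lam bs zs us.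
Proof.
case=> h1 hz h3 hr beta z u; split.
  by rewrite !L_fin // hr !ip0r.
have [hz'|hz'] := pselect (inZ c0 z); last by rewrite (L_inf _ _ hz') leey.
rewrite !L_fin // lee_fin hr ip0r subr0 (resD _ _ hr) ipBr ipAs.
have := h1 beta; have := h3 z hz'; lra.
Qed.

End Lag.


Section Sel.
Variables (R : realType) (p : nat).

Lemma sel_sum (I : {set 'I_p}) (f : 'I_p -> R) j :
  \sum_(k < #|I|) (j == enum_val k)%:R * f (enum_val k) = if j \in I then f j else 0.
Proof.
case: (boolP (j \in I)) => hj.
  rewrite (bigD1 (enum_rank_in hj j)) //= enum_rankK_in // eqxx mul1r big1 ?addr0 //.
  move=> k hk; case: eqP => [ejk|]; last by rewrite mul0r.
  have e2 : enum_val (enum_rank_in hj j) = enum_val k by rewrite (enum_rankK_in hj hj).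
  by move/enum_val_inj: e2 => e2; rewrite e2 eqxx in hk.
rewrite big1 // => k _; case: eqP => [ejk|]; last by rewrite mul0r.
by move: hj; rewrite ejk enum_valP.
Qed.

Lemma selT_entry (I : {set 'I_p}) (v : 'cV[R]_p) k :
  ((sel R I)^T *m v) k 0 = v (enum_val k) 0.
Proof.
rewrite mxE (bigD1 (enum_val k)) //= big1 ?addr0.
  by rewrite !mxE eqxx mul1r.
by move=> j hj; rewrite !mxE (negbTE hj) mul0r.
Qed.

Lemma sel_mul_entry (I : {set 'I_p}) (v : 'cV[R]_p) j :
  (sel R I *m ((sel R I)^T *m v)) j 0 = if j \in I then v j 0 else 0.
Proof.
rewrite mxE -(sel_sum I (fun j => v j 0) j); apply: eq_bigr => k _.
by rewrite selT_entry mxE.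
Qed.

Variables (K : nat) (blk : 'I_p -> 'I_K).

Lemma sum_sel (v : 'cV[R]_p) :
  \sum_(i < K) sel R (block blk i) *m ((sel R (block blk i))^T *m v) = v.
Proof.
apply/matrixP => j l; rewrite (ord1 l) summxE.
under eq_bigr do rewrite sel_mul_entry inE.
by rewrite -big_mkcond /= (big_pred1 (blk j)) // => i; rewrite /= eq_sym.
Qed.

End Sel.

Section Algs.
Variables (R : realType) (n p K : nat) (X : 'M[R]_(n, p)) (y : 'cV[R]_n)
  (lam mu eta : R) (blk : 'I_p -> 'I_K) (beta z u : nat -> 'cV[R]_p).
Let A := X^T *m X.
Let c := X^T *m y.
Let c0 := n%:R * lam.

Lemma alg1_eqs : algorithm1 X y lam mu eta beta z u -> forall t,
  [/\ beta t.+1 = phb A eta (beta t) (z t) (u t), z t.+1 = phz c0 mu (beta t) (z t) (u t) &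
      u t.+1 = phu A c c0 mu eta (beta t) (z t) (u t)].
Proof.
move=> H t; have [hb hz hu] := H t.
have symA : A^T = A by rewrite /A trmx_mul trmxK.
have Eb : beta t.+1 = phb A eta (beta t) (z t) (u t) by rewrite hb /phb -/A symA.
have Ez : z t.+1 = phz c0 mu (beta t) (z t) (u t) by exact: hz.
split => //; rewrite hu /phu -Eb -Ez.
by [].
Qed.

Lemma alg2_eqs : algorithm2 blk X y lam mu eta beta z u -> forall t,
  [/\ beta t.+1 = phb A eta (beta t) (z t) (u t), z t.+1 = phz c0 mu (beta t) (z t) (u t) &
      u t.+1 = phu A c c0 mu eta (beta t) (z t) (u t)].
Proof.
move=> H t; have [hb hz hu] := H t.
have sumAb (v : 'cV[R]_p) :
    \sum_(i < K) (X^T *m (X *m sel R (block blk i))) *m ((sel R (block blk i))^T *m v) = A *m v.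
  rewrite -[in RHS](sum_sel blk v) mulmx_sumr; apply: eq_bigr => i _.
  by rewrite /A !mulmxA.
have Eb : beta t.+1 = phb A eta (beta t) (z t) (u t).
  apply/matrixP => j l; rewrite (ord1 l).
  set i := blk j.
  have hj : j \in block blk i by rewrite inE.
  set k := enum_rank_in hj j.
  have ekj : enum_val k = j by exact: enum_rankK_in.
  have := congr1 (fun M : 'cV[R]_#|block blk i| => M k 0) (hb i).
  have -> : (sel R (block blk i))^T *m beta t +
      eta^-1 *: ((X^T *m (X *m sel R (block blk i)))^T *m u t) =
      (sel R (block blk i))^T *m (beta t + eta^-1 *: (A *m u t)).
    by rewrite mulmxDr -scalemxAr !trmx_mul trmxK /A !mulmxA.
  rewrite /= selT_entry ekj => ->.
  have se m tau (v : 'cV[R]_m) i0 : (soft tau v) i0 0 = sf tau (v i0 0) by rewrite /soft mxE.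
  by rewrite /phb !se selT_entry ekj.
have Ez : z t.+1 = phz c0 mu (beta t) (z t) (u t) by exact: hz.
split => //.
by rewrite hu /phu -Eb -Ez !sumAb.
Qed.

End Algs.

Theorem theorem2 (R : realType) (n p K : nat) (X : 'M[R]_(n, p)) (y : 'cV[R]_n)
  (lam mu lmax : R) (blk : 'I_p -> 'I_K) (beta z u : nat -> 'cV[R]_p) :
  0 <= lam -> 0 < mu ->
  is_lambda_max (mu *: ((X^T *m X)^T *m (X^T *m X))) lmax ->
  (0 < K)%N ->
  (forall i : 'I_K, exists j : 'I_p, blk j = i) ->
  (algorithm1 X y lam mu (lmax + 1) beta z u \/
   algorithm2 blk X y lam mu (lmax + 1) beta z u) ->
  (exists bs zs us : 'cV[R]_p, saddle X y lam bs zs us) ->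
  exists bs zs us : 'cV[R]_p,
    saddle X y lam bs zs us /\
    beta t @[t --> \oo] --> bs /\
    z t @[t --> \oo] --> zs /\
    u t @[t --> \oo] --> us /\
    (forall T : nat, (0 < T)%N ->
       Hnorm2 (Hmat X mu (lmax + 1))
         (stack (beta T) (z T) (u T) - stack (beta T.+1) (z T.+1) (u T.+1))
       <= (T.+1)%:R^-1 *
          Hnorm2 (Hmat X mu (lmax + 1)) (stack (beta 0) (z 0) (u 0) - stack bs zs us)).
Proof.
move=> lam0 mu0 hmax _ _ halg [bs [zs [us hsad]]].
have symA : (X^T *m X)^T = X^T *m X by rewrite trmx_mul trmxK.
rewrite symA in hmax.
set A := X^T *m X in symA hmax *.
have symM : (mu *: (A *m A))^T = mu *: (A *m A) by rewrite linearZ /= trmx_mul symA.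
have MvE v : ip v ((mu *: (A *m A)) *m v) = mu * ip (A *m v) (A *m v).
  by rewrite -scalemxAl ipZr -mulmxA [in RHS]ip_mul symA.
have ray v : mu * ip (A *m v) (A *m v) <= (lmax + 1 - 1) * ip v v.
  by rewrite addrK -MvE; exact: rayleigh symM hmax v.
have l0 : 0 <= lmax.
  case: hmax => /eigenvalueP [r hr r0] _.
  have hw : (mu *: (A *m A)) *m r^T = lmax *: r^T.
    by rewrite -symM -trmx_mul hr linearZ.
  have w0 : r^T != 0 by rewrite trmx_eq0.
  have := MvE r^T; rewrite hw ipZr => e.
  have p0 := ip_pos_norm w0.
  rewrite -(pmulr_lge0 _ p0) e; apply: mulr_ge0; [exact: ltW | exact: ip_ge0].
have eta_gt0 : 0 < lmax + 1 by lra.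
have eta_ge1 : 1 <= lmax + 1 by lra.
have c0ge : 0 <= n%:R * lam by rewrite mulr_ge0.
have alg : forall t,
  [/\ beta t.+1 = phb A (lmax + 1) (beta t) (z t) (u t),
      z t.+1 = phz (n%:R * lam) mu (beta t) (z t) (u t) &
      u t.+1 = phu A (X^T *m y) (n%:R * lam) mu (lmax + 1) (beta t) (z t) (u t)].
  by case: halg => [h|h]; [exact: alg1_eqs | exact: alg2_eqs].
have ho := saddle_opt lam0 hsad.
have [lb [lz [lu [hopt hb hz hu hr]]]] := main_conv symA c0ge mu0 eta_gt0 eta_ge1 ray alg ho.
exists lb, lz, lu; split; first exact: opt_saddle.
do 3 (split => //).
move=> T _; rewrite !stackB !Hnorm2_stack ?lt0r_neq0 //; exact: hr T.
Qed.
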